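(* Let $Br_n^+\subseteq SB_n^+$ denote the submonoid generated by $\sigma_1,\dots,\sigma_{n-1}$. For every element $w\in SB_n^+$ there exists a unique greatest left divisor of $w$ belonging to $Br_n^+$: that is, there is a unique $d\in Br_n^+$ with $w=du$ for some $u\in SB_n^+$ such that every $a\in Br_n^+$ with $w=av$ for some $v\in SB_n^+$ satisfies $d=ab$ for some $b\in SB_n^+$. The analogous statement holds for right divisors.
   Context: Fix $n\ge 2$. The positive singular braid monoid $SB_n^+$ is the monoid with generators $\sigma_1,\dots,\sigma_{n-1},x_1,\dots,x_{n-1}$ and relations: $\sigma_i\sigma_j=\sigma_j\sigma_i$ and $x_ix_j=x_jx_i$ if $|i-j|>1$; $x_i\sigma_j=\sigma_jx_i$ if $|i-j|\ne 1$; $\sigma_i\sigma_{i+1}\sigma_i=\sigma_{i+1}\sigma_i\sigma_{i+1}$; $\sigma_i\sigma_{i+1}x_i=x_{i+1}\sigma_i\sigma_{i+1}$; $\sigma_{i+1}\sigma_ix_{i+1}=x_i\sigma_{i+1}\sigma_i$. *)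

(* Defs.v *)
From mathcomp Require Import all_boot.
Set Implicit Arguments. Unset Strict Implicit. Unset Printing Implicit Defensive.

(* Generators of SB_n^+ : sg i = sigma_i, xg i = x_i  (indices 1 <= i <= n-1). *)
Inductive gen : Type := sg of nat | xg of nat.

Definition gen_idx (a : gen) : nat := match a with sg i => i | xg i => i end.
Definition is_sg (a : gen) : bool := match a with sg _ => true | xg _ => false end.

Definition valid_idx (n i : nat) : bool := (1 <= i) && (i < n).

Definition valid_word (n : nat) (w : seq gen) : bool :=
  all (fun a => valid_idx n (gen_idx a)) w.

(* words in sigma_1..sigma_{n-1} only: representatives of elements of Br_n^+ *)
Definition braid_word (n : nat) (w : seq gen) : bool :=
  valid_word n w && all is_sg w.

Definition far (i j : nat) : bool := (i.+1 < j) || (j.+1 < i).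
Definition not_adj (i j : nat) : bool := (i != j.+1) && (j != i.+1).

Inductive defrel (n : nat) : seq gen -> seq gen -> Prop :=
| rel_ss i j : valid_idx n i -> valid_idx n j -> far i j ->
    defrel n [:: sg i; sg j] [:: sg j; sg i]
| rel_xx i j : valid_idx n i -> valid_idx n j -> far i j ->
    defrel n [:: xg i; xg j] [:: xg j; xg i]
| rel_xs i j : valid_idx n i -> valid_idx n j -> not_adj i j ->
    defrel n [:: xg i; sg j] [:: sg j; xg i]
| rel_sss i : valid_idx n i -> valid_idx n i.+1 ->
    defrel n [:: sg i; sg i.+1; sg i] [:: sg i.+1; sg i; sg i.+1]
| rel_ssx i : valid_idx n i -> valid_idx n i.+1 ->
    defrel n [:: sg i; sg i.+1; xg i] [:: xg i.+1; sg i; sg i.+1]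
| rel_ssx' i : valid_idx n i -> valid_idx n i.+1 ->
    defrel n [:: sg i.+1; sg i; xg i.+1] [:: xg i; sg i.+1; sg i].

(* the congruence on words generated by the defining relations;
   SB_n^+ = valid words modulo sbeq n *)
Inductive sbeq (n : nat) : seq gen -> seq gen -> Prop :=
| sbeq_step u v l r : defrel n l r -> sbeq n (u ++ l ++ v) (u ++ r ++ v)
| sbeq_refl w : sbeq n w w
| sbeq_sym w1 w2 : sbeq n w1 w2 -> sbeq n w2 w1
| sbeq_trans w1 w2 w3 : sbeq n w1 w2 -> sbeq n w2 w3 -> sbeq n w1 w3.

Definition greatest_left_braid_divisor (n : nat) (w d : seq gen) : Prop :=
  braid_word n d /\
  (exists u, valid_word n u /\ sbeq n w (d ++ u)) /\
  (forall a, braid_word n a -> (exists v, valid_word n v /\ sbeq n w (a ++ v)) ->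
     exists b, valid_word n b /\ sbeq n d (a ++ b)).

Definition greatest_right_braid_divisor (n : nat) (w d : seq gen) : Prop :=
  braid_word n d /\
  (exists u, valid_word n u /\ sbeq n w (u ++ d)) /\
  (forall a, braid_word n a -> (exists v, valid_word n v /\ sbeq n w (v ++ a)) ->
     exists b, valid_word n b /\ sbeq n d (b ++ a)).

(* Main.v *)
From HB Require Import structures.
Require Import Defs.
From mathcomp Require Import all_boot zify.
Set Implicit Arguments. Unset Strict Implicit. Unset Printing Implicit Defensive.

Definition gcode (a : gen) : nat * bool := (gen_idx a, is_sg a).
Definition gdecode (p : nat * bool) : gen := if p.2 then sg p.1 else xg p.1.
Lemma gcodeK : cancel gcode gdecode. Proof. by case. Qed.
HB.instance Definition _ := Equality.copy gen (can_type gcodeK).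

Definition comp (n : nat) (a b : gen) : option (seq gen * seq gen) :=
  if valid_idx n (gen_idx a) && valid_idx n (gen_idx b) then
  match a, b with
  | sg i, sg j => if i == j then None else if far i j then Some ([:: sg j], [:: sg i])
                  else Some ([:: sg j; sg i], [:: sg i; sg j])
  | xg i, xg j => if far i j then Some ([:: xg j], [:: xg i]) else None
  | xg i, sg j => if not_adj i j then Some ([:: sg j], [:: xg i])
                  else Some ([:: sg j; sg i], [:: sg i; xg j])
  | sg j, xg i => if not_adj i j then Some ([:: xg i], [:: sg j])
                  else Some ([:: sg i; xg j], [:: sg j; sg i])
  end else None.

Inductive res := RSome of seq gen & seq gen | RNo | RFail.

Fixpoint rv (n fuel : nat) (p q : seq gen) : res :=
  match fuel with 0 => RFail | f.+1 =>
  match p, q with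
  | [::], _ => RSome q [::]
  | _, [::] => RSome [::] p
  | a :: p1, b :: q1 =>
    if a == b then rv n f p1 q1 else
    match comp n a b with
    | None => RNo
    | Some (fa, fb) =>
      match rv n f p1 fa with
      | RSome u1 z1 =>
        match rv n f q1 fb with
        | RSome v2 z2 =>
          match rv n f z1 z2 with
          | RSome w1 w2 => RSome (u1 ++ w1) (v2 ++ w2)
          | r => r end
        | r => r end
      | r => r end
    end
  end end.

Definition cands (p : seq gen) : seq gen :=
  match p with [:: b] => [:: b] | [:: b; _] => [:: sg (gen_idx b); xg (gen_idx b)] | _ => [::] end.

Definition relnbr (n : nat) (l : seq gen) : seq (seq gen) :=
  match l with
  | a :: p => [seq d :: (odflt ([::], [::]) (comp n a d)).2 | d <- cands p &
               if comp n a d is Some (p', _) then p' == p else false]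
  | [::] => [::] end.

Fixpoint nbrs (n : nat) (w : seq gen) : seq (seq gen) :=
  match w with
  | [::] => [::]
  | a :: w' => [seq r ++ drop 2 w | r <- relnbr n (take 2 w)] ++
               [seq r ++ drop 3 w | r <- relnbr n (take 3 w)] ++
               [seq a :: u | u <- nbrs n w']
  end.

Fixpoint eqclass (n fuel : nat) (S : seq (seq gen)) : seq (seq gen) :=
  match fuel with 0 => S | f.+1 => eqclass n f (undup (S ++ flatten (map (nbrs n) S))) end.

Definition eqv n w1 w2 := w2 \in eqclass n 8 [:: w1].

Definition cube_check (n : nat) (a b c : gen) : bool :=
  match comp n c a, comp n c b with
  | Some (fca, fac), Some (fcb, fbc) =>
    match rv n 20 fca fcb with
    | RSome r1 r2 =>
      if a == b then eqv n (fac ++ r1) (fbc ++ r2) else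
      match comp n a b with
      | Some (fab, fba) =>
        has (fun w => (take (size fab) w == fab) && eqv n (fbc ++ r2) (fba ++ drop (size fab) w))
            (eqclass n 8 [:: fac ++ r1])
      | None => false end
    | RNo => true
    | RFail => false end
  | _, _ => true end.

Section Basic.
Variable n : nat.

Lemma sbeq_cat p s w1 w2 : sbeq n w1 w2 -> sbeq n (p ++ w1 ++ s) (p ++ w2 ++ s).
Proof.
elim=> [u v l r H| w | w1' w2' _ IH | w1' w2' w3' _ IH1 _ IH2].
- have E : forall l', p ++ (u ++ l' ++ v) ++ s = (p ++ u) ++ l' ++ (v ++ s).
    by move=> l'; rewrite !catA.
  rewrite !E; exact: sbeq_step.
- exact: sbeq_refl.
- exact: sbeq_sym.
- exact: sbeq_trans IH2.
Qed.

Lemma sbeq_catl p w1 w2 : sbeq n w1 w2 -> sbeq n (p ++ w1) (p ++ w2).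
Proof. by move=> H; have := sbeq_cat p [::] H; rewrite !cats0. Qed.

Lemma sbeq_catr s w1 w2 : sbeq n w1 w2 -> sbeq n (w1 ++ s) (w2 ++ s).
Proof. by move=> H; have := sbeq_cat [::] s H. Qed.

Lemma sbeq_cons a w1 w2 : sbeq n w1 w2 -> sbeq n (a :: w1) (a :: w2).
Proof. exact: (sbeq_catl [:: a]). Qed.

Lemma sbeq_rel l r : defrel n l r -> sbeq n l r.
Proof. by move=> H; have := sbeq_step [::] [::] H; rewrite /= !cats0. Qed.

Lemma sbeq_inv (T : Type) (F : seq gen -> T) :
  (forall u v l r, defrel n l r -> F (u ++ l ++ v) = F (u ++ r ++ v)) ->
  forall w1 w2, sbeq n w1 w2 -> F w1 = F w2.
Proof.
move=> HF w1 w2; elim=> [u v l r H| w | w1' w2' _ IH | w1' w2' w3' _ IH1 _ IH2] //.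
- exact: HF.
- by rewrite IH1.
Qed.

Lemma sbeq_size w1 w2 : sbeq n w1 w2 -> size w1 = size w2.
Proof.
apply: sbeq_inv => u v l r H; rewrite !size_cat; congr (_ + (_ + _)); by case: H.
Qed.

Lemma sbeq_valid w1 w2 : sbeq n w1 w2 -> valid_word n w1 = valid_word n w2.
Proof.
apply: sbeq_inv => u v l r H; rewrite /valid_word !all_cat; congr (_ && (_ && _)).
by case: H => * /=; rewrite ?andbT; repeat match goal with H : is_true _ |- _ => rewrite H end.
Qed.

Lemma sbeq_sgs w1 w2 : sbeq n w1 w2 -> all is_sg w1 = all is_sg w2.
Proof.
apply: sbeq_inv => u v l r H; rewrite !all_cat; congr (_ && (_ && _)); by case: H.
Qed.

Lemma sbeq_idx (T : pred nat) w1 w2 : sbeq n w1 w2 ->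
  all (fun a => T (gen_idx a)) w1 = all (fun a => T (gen_idx a)) w2.
Proof.
apply: sbeq_inv => u v l r H; rewrite !all_cat; congr (_ && (_ && _)).
case: H => * /=; rewrite ?andbT //; try by rewrite andbC.
- by case: (T _); case: (T _).
- by case: (T _); case: (T _).
- by case: (T _); case: (T _).
Qed.

Lemma sbeq_braid w1 w2 : sbeq n w1 w2 -> braid_word n w1 = braid_word n w2.
Proof. by move=> H; rewrite /braid_word (sbeq_valid H) (sbeq_sgs H). Qed.

End Basic.

Section Comp.
Variable n : nat.

Lemma far_sym i j : far i j = far j i.
Proof. by rewrite /far orbC. Qed.

Lemma not_adj_sym i j : not_adj i j = not_adj j i.
Proof. by rewrite /not_adj andbC. Qed.

Lemma comp_sym a b : comp n b a = omap (fun pq => (pq.2, pq.1)) (comp n a b).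
Proof.
rewrite /comp andbC; case: (_ && _) => //.
case: a b => i [] j /=; rewrite ?(eq_sym j i) ?(far_sym j i);
  by repeat case: ifP.
Qed.

Lemma comp_symS a b p q : comp n a b = Some (p, q) -> comp n b a = Some (q, p).
Proof. by move=> H; rewrite (comp_sym a b) H. Qed.

Lemma comp_valid a b p q : comp n a b = Some (p, q) ->
  valid_idx n (gen_idx a) /\ valid_idx n (gen_idx b).
Proof. by rewrite /comp; case: andP. Qed.

Lemma comp_neq a b p q : comp n a b = Some (p, q) -> a <> b.
Proof.
move=> H E; subst b; move: H; rewrite /comp; case: (_ && _) => //.
case: a => i /=; first by rewrite eqxx.
by rewrite /far; have -> : (i.+1 < i) = false by lia.
Qed.

Lemma comp_idx a b p q : comp n a b = Some (p, q) ->
  all (fun c => gen_idx c \in [:: gen_idx a; gen_idx b]) (p ++ q).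
Proof.
rewrite /comp; case: (_ && _) => //.
case: a b => i [] j /=; (repeat case: ifP => _); move=> E;
  first [discriminate E | case: E => <- <- /=; by rewrite ?inE ?eqxx ?orbT].
Qed.

Lemma comp_sg i j p q : comp n (sg i) (sg j) = Some (p, q) -> all is_sg (p ++ q).
Proof.
rewrite /comp; case: (_ && _) => //=; (repeat case: ifP => _); move=> E;
  first [discriminate E | by case: E => <- <-].
Qed.

Lemma comp_validw a b p q : comp n a b = Some (p, q) -> valid_word n (p ++ q).
Proof.
move=> H; have [va vb] := comp_valid H; have := comp_idx H.
rewrite /valid_word; apply: sub_all => c; rewrite !inE => /orP[] /eqP ->; done.
Qed.

Lemma defrel_comp l r : defrel n l r ->
  exists a b l' r', [/\ l = a :: l', r = b :: r' & comp n a b = Some (l', r')].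
Proof.
case=> [i j vi vj f | i j vi vj f | i j vi vj f | i vi vi1 | i vi vi1 | i vi vi1];
  do 4 eexists; split; try reflexivity; rewrite /comp /= ?vi ?vj ?vi1 //=.
- have -> : (i == j) = false by move: f; rewrite /far; lia.
  by rewrite f.
- by rewrite f.
- by rewrite f.
- have -> : (i == i.+1) = false by lia.
  by have -> : far i i.+1 = false by rewrite /far; lia.
- by have -> : not_adj i.+1 i = false by rewrite /not_adj; lia.
- by have -> : not_adj i i.+1 = false by rewrite /not_adj; lia.
Qed.

Lemma comp_sbeq a b p q : comp n a b = Some (p, q) -> sbeq n (a :: p) (b :: q).
Proof.
rewrite /comp; case: andP => // -[vi vj].
case: a b vi vj => i [] j /= vi vj.
- case: ifP => // ne; case: ifP => f [<- <-]; first by apply: sbeq_rel; exact: rel_ss.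
  have [E|E] : j = i.+1 \/ i = j.+1 by move: ne f; rewrite /far; lia.
  + subst j; apply: sbeq_rel; exact: rel_sss.
  + subst i; apply: sbeq_sym; apply: sbeq_rel; exact: rel_sss.
- case: ifP => na [<- <-].
  + apply: sbeq_sym; apply: sbeq_rel; apply: rel_xs => //; by rewrite not_adj_sym.
  + have [E|E] : j = i.+1 \/ i = j.+1 by move: na; rewrite /not_adj; lia.
    * subst j; apply: sbeq_rel; exact: rel_ssx.
    * subst i; apply: sbeq_rel; exact: rel_ssx'.
- case: ifP => na [<- <-].
  + apply: sbeq_rel; exact: rel_xs.
  + have [E|E] : j = i.+1 \/ i = j.+1 by move: na; rewrite /not_adj; lia.
    * subst j; apply: sbeq_sym; apply: sbeq_rel; exact: rel_ssx'.
    * subst i; apply: sbeq_sym; apply: sbeq_rel; exact: rel_ssx.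
- case: ifP => // f [<- <-]; apply: sbeq_rel; exact: rel_xx.
Qed.

End Comp.

Section Garside.
Variable n : nat.

Definition Q a X b Y : Prop :=
  if a == b then sbeq n X Y else
  exists p q Z, [/\ comp n a b = Some (p, q), sbeq n X (p ++ Z) & sbeq n Y (q ++ Z)].

Definition Hm m := forall a b X Y, size X = m -> sbeq n (a :: X) (b :: Y) -> Q a X b Y.

Lemma Q_sym a X b Y : Q a X b Y -> Q b Y a X.
Proof.
rewrite /Q eq_sym; case: eqP => _; first exact: sbeq_sym.
case=> p [q [Z [Hc H1 H2]]]; exists q, p, Z; split => //; exact: comp_symS.
Qed.

Lemma Q_step u v l r a X b Y : defrel n l r -> u ++ l ++ v = a :: X -> u ++ r ++ v = b :: Y ->
  Q a X b Y.
Proof.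
move=> H; case: u => [|c u] /=.
- have [a' [b' [l' [r' [-> -> Hc]]]]] := defrel_comp H.
  case=> <- <- [<- <-]; rewrite /Q; case: eqP => [E|_]; first by move: (comp_neq Hc).
  by exists l', r', v; split => //; exact: sbeq_refl.
- case=> <- <- [<- <-]; rewrite /Q eqxx; apply: sbeq_catl; apply: sbeq_catr; exact: sbeq_rel.
Qed.

Lemma rv_ok K (HK : forall m, m < K -> Hm m) fuel : forall p q U V,
  size (p ++ U) <= K -> sbeq n (p ++ U) (q ++ V) ->
  match rv n fuel p q with
  | RSome p' q' => exists W, sbeq n U (p' ++ W) /\ sbeq n V (q' ++ W)
  | RNo => False | RFail => True end.
Proof.
elim: fuel => [//|f IH] [|a p1] [|b q1] U V /= sz E.
- by exists V; split => //; exact: sbeq_refl.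
- by exists V; split => //; exact: sbeq_refl.
- by exists U; split; [exact: sbeq_refl | exact: sbeq_sym].
have sz1 : size (p1 ++ U) < K by move: sz; rewrite /= size_cat; lia.
have HQ := HK _ sz1 a b (p1 ++ U) (q1 ++ V) erefl E.
move: HQ; rewrite /Q; case: eqP => [_ HQ|_].
  by apply: IH => //; exact: ltnW.
case=> fa [fb [Z [Hc E1 E2]]]; rewrite Hc.
have s1 : size (p1 ++ U) <= K by exact: ltnW.
have := IH p1 fa U Z s1 E1; case: (rv n f p1 fa) => // u1 z1 [W1 [U1 Z1]].
have sE := sbeq_size E; rewrite /= in sE.
have s2 : size (q1 ++ V) <= K by case: sE => <-.
have := IH q1 fb V Z s2 E2; case: (rv n f q1 fb) => // v2 z2 [W2 [V2 Z2]].
have E3 : sbeq n (z1 ++ W1) (z2 ++ W2) by apply: sbeq_trans (sbeq_sym Z1) Z2.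
have s3 : size (z1 ++ W1) <= K.
  by rewrite -(sbeq_size Z1); apply: leq_trans s1; rewrite (sbeq_size E1) size_cat leq_addl.
have := IH z1 z2 W1 W2 s3 E3; case: (rv n f z1 z2) => // w1 w2 [W [W1' W2']].
exists W; split.
- rewrite -catA; apply: sbeq_trans U1 _; exact: sbeq_catl.
- rewrite -catA; apply: sbeq_trans V2 _; exact: sbeq_catl.
Qed.

Definition CubeProp a b c : Prop :=
  forall fca fac fcb fbc, comp n c a = Some (fca, fac) -> comp n c b = Some (fcb, fbc) ->
  match rv n 20 fca fcb with
  | RSome r1 r2 => (a = b -> sbeq n (fac ++ r1) (fbc ++ r2)) /\
      (a <> b -> exists fab fba s, [/\ comp n a b = Some (fab, fba),
          sbeq n (fac ++ r1) (fab ++ s) & sbeq n (fbc ++ r2) (fba ++ s)])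
  | RNo => True | RFail => False end.

Lemma Q_trans a X c Z b Y : (forall m, m < size Z -> Hm m) -> CubeProp a b c ->
  Q a X c Z -> Q c Z b Y -> Q a X b Y.
Proof.
move=> HK cube; rewrite /Q.
case: (a =P c) => [ac|ac].
  subst c; move=> E1; case: (a =P b) => [ab|ab]; first by subst b; apply: sbeq_trans.
  by case=> p [q [W [Hc E2 E3]]]; exists p, q, W; split => //; apply: sbeq_trans E2.
case=> fac [fca [U [Hac EX EZ]]].
case: (c =P b) => [cb|cb].
  subst b; move=> EY; case: (a =P c) => // _.
  by exists fac, fca, U; split => //; apply: sbeq_trans (sbeq_sym EY) EZ.
case=> fcb [fbc [V [Hcb EZ' EY]]].
have Hca := comp_symS Hac.
have E : sbeq n (fca ++ U) (fcb ++ V) by apply: sbeq_trans (sbeq_sym EZ) EZ'.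
have sz : size (fca ++ U) <= size Z by rewrite (sbeq_size EZ).
have := rv_ok HK 20 sz E; have := cube _ _ _ _ Hca Hcb.
case: (rv n 20 fca fcb) => // r1 r2 [C1 C2] [W [UW VW]].
have XW : sbeq n X ((fac ++ r1) ++ W).
  by rewrite -catA; apply: sbeq_trans EX _; exact: sbeq_catl.
have YW : sbeq n Y ((fbc ++ r2) ++ W).
  by rewrite -catA; apply: sbeq_trans EY _; exact: sbeq_catl.
case: (a =P b) => [ab|ab].
  apply: sbeq_trans XW _; apply: sbeq_sym; apply: sbeq_trans YW _.
  exact: sbeq_catr (sbeq_sym (C1 ab)).
have [fab [fba [s [Hab S1 S2]]]] := C2 ab.
exists fab, fba, (s ++ W); split => //.
- by apply: sbeq_trans XW _; rewrite catA; exact: sbeq_catr.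
- by apply: sbeq_trans YW _; rewrite catA; exact: sbeq_catr.
Qed.

Lemma H_all (cube : forall a b c, CubeProp a b c) m : Hm m.
Proof.
elim/ltn_ind: m => m IHm.
have key : forall w1 w2, sbeq n w1 w2 -> forall a X b Y, w1 = a :: X -> w2 = b :: Y ->
  size X = m -> Q a X b Y.
  move=> w1 w2; elim=> [u v l r H | w | w1' w2' E IH | w1' w2' w3' E1 IH1 E2 IH2] a X b Y e1 e2 sX.
  - exact: Q_step H e1 e2.
  - by rewrite e1 in e2; case: e2 => <- <-; rewrite /Q eqxx; exact: sbeq_refl.
  - have sY : size Y = m by have := sbeq_size E; rewrite e1 e2 /= sX; case.
    apply: Q_sym; exact: (IH _ _ _ _ e2 e1 sY).
  - have sw2 := sbeq_size E1; rewrite e1 /= in sw2.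
    case: w2' E1 IH1 E2 IH2 sw2 => [//|c Z] E1 IH1 E2 IH2 [sZ].
    apply: (@Q_trans a X c Z b Y).
    + by rewrite -sZ sX.
    + exact: cube.
    + exact: IH1.
    + by apply: IH2 => //; rewrite -sZ.
move=> a b X Y sX E; exact: key E a X b Y erefl erefl sX.
Qed.

End Garside.

Definition rn (psi : nat -> nat) (a : gen) : gen :=
  match a with sg i => sg (psi i) | xg i => xg (psi i) end.

Lemma sg_eq x y : (sg x == sg y) = (x == y).
Proof. by apply/eqP/eqP => [[]|->]. Qed.
Lemma xg_eq x y : (xg x == xg y) = (x == y).
Proof. by apply/eqP/eqP => [[]|->]. Qed.
Lemma sgxg_eq x y : (sg x == xg y) = false.
Proof. by apply/eqP. Qed.
Lemma xgsg_eq x y : (xg x == sg y) = false.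
Proof. by apply/eqP. Qed.

Lemma farE i j : far i j = [&& i != j, i != j.+1 & j != i.+1].
Proof. rewrite /far; lia. Qed.

Definition good (n' n : nat) (psi : nat -> nat) (T : seq nat) :=
  forall p q, p \in T -> q \in T ->
  [/\ (psi p == psi q) = (p == q), (psi p == (psi q).+1) = (p == q.+1)
    & valid_idx n (psi p) = valid_idx n' p].

Definition inT (T : seq nat) (a : gen) := gen_idx a \in T.

Definition resmap (f : gen -> gen) (r : res) :=
  match r with RSome p q => RSome (map f p) (map f q) | r => r end.

Section Rename.
Variables (n' n : nat) (psi : nat -> nat) (T : seq nat).

Lemma comp_inT a b p q : comp n' a b = Some (p, q) -> inT T a -> inT T b ->
  all (inT T) p && all (inT T) q.
Proof.
move=> H ia ib; rewrite -all_cat; apply: sub_all (comp_idx H) => c.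
by rewrite /inT !inE => /orP[] /eqP ->.
Qed.

Lemma rv_inT fuel : forall p q p' q', all (inT T) p -> all (inT T) q ->
  rv n' fuel p q = RSome p' q' -> all (inT T) p' && all (inT T) q'.
Proof.
elim: fuel => [//|f IH] [|a p1] [|b q1] p' q' /=.
- by move=> H1 H2 [<- <-].
- by move=> H1 H2 [<- <-]; rewrite /= ?andbT.
- by move=> H1 H2 [<- <-].
move=> /andP[ia ip] /andP[ib iq].
case: eqP => _; first exact: IH.
case Hc: (comp n' a b) => [[fa fb]|//].
have /andP[ifa ifb] := comp_inT Hc ia ib.
case E1: (rv n' f p1 fa) => [u1 z1| |] //.
have /andP[iu1 iz1] := IH _ _ _ _ ip ifa E1.
case E2: (rv n' f q1 fb) => [v2 z2| |] //.
have /andP[iv2 iz2] := IH _ _ _ _ iq ifb E2.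
case E3: (rv n' f z1 z2) => [w1 w2| |] //.
have /andP[iw1 iw2] := IH _ _ _ _ iz1 iz2 E3.
by case=> <- <-; rewrite !all_cat iu1 iw1 iv2 iw2.
Qed.

Hypothesis G : good n' n psi T.

Lemma rn_eq a b : inT T a -> inT T b -> (rn psi a == rn psi b) = (a == b).
Proof.
move=> ia ib; have [e _ _] := G ia ib.
by case: a b ia ib e => i [] j /= _ _ e; rewrite ?sg_eq ?xg_eq ?sgxg_eq ?xgsg_eq ?e.
Qed.

Lemma comp_rn a b : inT T a -> inT T b ->
  comp n (rn psi a) (rn psi b) = omap (fun pq => (map (rn psi) pq.1, map (rn psi) pq.2)) (comp n' a b).
Proof.
move=> ia ib; have [e1 s1 v1] := G ia ib; have [_ s2 v2] := G ib ia.
rewrite /comp; have idx : forall c, gen_idx (rn psi c) = psi (gen_idx c) by case.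
rewrite !idx v1 v2; case: (_ && _) => //.
case: a b ia ib e1 s1 s2 {v1 v2} => i [] j /= _ _ e1 s1 s2;
  rewrite ?farE /not_adj ?e1 ?s1 ?s2;
  by case: (i == j); case: (i == j.+1); case: (j == i.+1).
Qed.

Lemma rv_rn fuel : forall p q, all (inT T) p -> all (inT T) q ->
  rv n fuel (map (rn psi) p) (map (rn psi) q) = resmap (rn psi) (rv n' fuel p q).
Proof.
elim: fuel => [//|f IH] [|a p1] [|b q1] //= /andP[ia ip] /andP[ib iq].
rewrite rn_eq //; case: eqP => _; first exact: IH.
rewrite comp_rn //; case Hc: (comp n' a b) => [[fa fb]|//] /=.
have /andP[ifa ifb] := comp_inT Hc ia ib.
rewrite IH //; case E1: (rv n' f p1 fa) => [u1 z1| |] //=.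
have /andP[iu1 iz1] := rv_inT ip ifa E1.
rewrite IH //; case E2: (rv n' f q1 fb) => [v2 z2| |] //=.
have /andP[iv2 iz2] := rv_inT iq ifb E2.
rewrite IH //; case E3: (rv n' f z1 z2) => [w1 w2| |] //=.
by rewrite !map_cat.
Qed.

Lemma defrel_rn l r : defrel n' l r -> all (inT T) l -> defrel n (map (rn psi) l) (map (rn psi) r).
Proof.
have V : forall p, p \in T -> valid_idx n' p -> valid_idx n (psi p).
  by move=> p ip vp; have [_ _ ->] := G ip ip.
have F : forall p q, p \in T -> q \in T -> far (psi p) (psi q) = far p q.
  move=> p q ip iq; have [e1 s1 _] := G ip iq; have [_ s2 _] := G iq ip.
  by rewrite !farE e1 s1 s2.
have NA : forall p q, p \in T -> q \in T -> not_adj (psi p) (psi q) = not_adj p q.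
  move=> p q ip iq; have [e1 s1 _] := G ip iq; have [_ s2 _] := G iq ip.
  by rewrite /not_adj s1 s2.
have S : forall p, p \in T -> p.+1 \in T -> psi p.+1 = (psi p).+1.
  by move=> p ip ip1; have [_ s _] := G ip1 ip; apply/eqP; rewrite s.
case=> [i j vi vj f | i j vi vj f | i j vi vj f | i vi vi1 | i vi vi1 | i vi vi1];
  rewrite /inT /= ?andbT.
- by move=> /andP[i1 i2]; apply: rel_ss; rewrite ?F ?V.
- by move=> /andP[i1 i2]; apply: rel_xx; rewrite ?F ?V.
- by move=> /andP[i1 i2]; apply: rel_xs; rewrite ?NA ?V.
- move=> /and3P[i1 i2 _]; rewrite (S _ i1 i2); by apply: rel_sss; rewrite -?(S _ i1 i2); apply: V.
- move=> /and3P[i1 i2 _]; rewrite (S _ i1 i2); by apply: rel_ssx; rewrite -?(S _ i1 i2); apply: V.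
- move=> /and3P[i2 i1 _]; rewrite (S _ i1 i2); by apply: rel_ssx'; rewrite -?(S _ i1 i2); apply: V.
Qed.

Lemma sbeq_rn w1 w2 : sbeq n' w1 w2 -> all (inT T) w1 -> sbeq n (map (rn psi) w1) (map (rn psi) w2).
Proof.
elim=> [u v l r H | w | w1' w2' E IH | w1' w2' w3' E1 IH1 E2 IH2].
- rewrite !all_cat => /and3P[_ il _]; rewrite !map_cat; apply: sbeq_step; exact: defrel_rn.
- by move=> _; exact: sbeq_refl.
- by move=> i; apply: sbeq_sym; apply: IH; rewrite /inT (sbeq_idx (fun p => p \in T) E).
- move=> i; apply: sbeq_trans (IH1 i) _; apply: IH2.
  by rewrite /inT -(sbeq_idx (fun p => p \in T) E1).
Qed.

End Rename.

Section Compute.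
Variable n : nat.

Lemma relnbr_sound l r : r \in relnbr n l -> sbeq n l r.
Proof.
case: l => [//|a p] /=; case/mapP => d; rewrite mem_filter.
case Hc: (comp n a d) => [[p' q]|//] /= /andP[/eqP E _] ->; subst p'.
exact: comp_sbeq.
Qed.

Lemma nbrs_sound w w' : w' \in nbrs n w -> sbeq n w w'.
Proof.
elim: w w' => [//|a w IH] w' /=; rewrite !mem_cat => /or3P[].
- case/mapP => r Hr ->; have H := @relnbr_sound (take 2 (a :: w)) r Hr.
  by rewrite -{1}(cat_take_drop 2 (a :: w)); apply: sbeq_catr.
- case/mapP => r Hr ->; have H := @relnbr_sound (take 3 (a :: w)) r Hr.
  by rewrite -{1}(cat_take_drop 3 (a :: w)); apply: sbeq_catr.
- by case/mapP => u Hu ->; apply: sbeq_cons; apply: IH.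
Qed.

Lemma eqclass_sound fuel w0 : forall S, (forall w, w \in S -> sbeq n w0 w) ->
  forall w, w \in eqclass n fuel S -> sbeq n w0 w.
Proof.
elim: fuel => [//|f IH] S HS /=; apply: IH => w; rewrite mem_undup mem_cat => /orP[/HS //|].
case/flattenP => s /mapP [u /HS Hu ->] /nbrs_sound H; exact: sbeq_trans Hu H.
Qed.

Lemma eqv_sound w1 w2 : eqv n w1 w2 -> sbeq n w1 w2.
Proof.
apply: eqclass_sound => w; rewrite inE => /eqP ->; exact: sbeq_refl.
Qed.

End Compute.

Definition letters : seq gen := [seq sg i | i <- iota 1 5] ++ [seq xg i | i <- iota 1 5].
Definition check_all :=
  all (fun a => all (fun b => all (fun c => cube_check 6 a b c) letters) letters) letters.

Lemma check_all_ok : check_all = true.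
Proof. vm_compute; reflexivity. Qed.

Arguments rv : simpl never.
Arguments eqclass : simpl never.
Arguments eqv : simpl never.

Lemma cube_from_check n' n psi a b c : cube_check n' a b c ->
  good n' n psi [:: gen_idx a; gen_idx b; gen_idx c] ->
  CubeProp n (rn psi a) (rn psi b) (rn psi c).
Proof.
set T := [:: _; _; _] => chk G.
have ia : inT T a by rewrite /inT !inE eqxx.
have ib : inT T b by rewrite /inT !inE eqxx ?orbT.
have ic : inT T c by rewrite /inT !inE eqxx ?orbT.
move=> fca fac fcb fbc; rewrite (comp_rn G ic ia) (comp_rn G ic ib).
move: chk; rewrite /cube_check.
case H1: (comp n' c a) => [[fca0 fac0]|] //=; case H2: (comp n' c b) => [[fcb0 fbc0]|] //=.
move=> chk [<- <-] [<- <-].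
have /andP[ifca ifac] := comp_inT H1 ic ia.
have /andP[ifcb ifbc] := comp_inT H2 ic ib.
rewrite (rv_rn G) //.
case E: (rv n' 20 fca0 fcb0) chk => [r1 r2| |] //= chk.
have /andP[ir1 ir2] := rv_inT ifca ifcb E.
split.
- move/eqP; rewrite (rn_eq G) // => /eqP ab; subst b; rewrite eqxx in chk.
  rewrite -!map_cat; apply: (sbeq_rn G); first exact: eqv_sound.
  by rewrite all_cat ifac ir1.
- move=> nab; have ab : a != b by apply/eqP => E'; apply: nab; rewrite E'.
  rewrite (negbTE ab) in chk.
  case H3: (comp n' a b) chk => [[fab0 fba0]|] // /hasP [w0 Hw /andP[/eqP tk Hv]].
  exists (map (rn psi) fab0), (map (rn psi) fba0), (map (rn psi) (drop (size fab0) w0)).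
  split.
  + by rewrite (comp_rn G) // H3.
  + rewrite -!map_cat; apply: (sbeq_rn G); last by rewrite all_cat ifac ir1.
    rewrite -{1}tk cat_take_drop; apply: eqclass_sound Hw => w; rewrite inE => /eqP ->.
    exact: sbeq_refl.
  + rewrite -!map_cat; apply: (sbeq_rn G); last by rewrite all_cat ifbc ir2.
    exact: eqv_sound.
Qed.

Definition patb (L : seq (nat * nat)) :=
  all (fun x => all (fun y => ((x.1 == y.1) == (x.2 == y.2)) && ((x.1 == y.1.+1) == (x.2 == y.2.+1))) L) L.

Ltac patt := rewrite /patb /=; repeat (apply/andP; split); apply/eqP; lia.

Lemma compress i j k : exists i' j' k',
  [/\ 0 < i' < 6, 0 < j' < 6, 0 < k' < 6 & patb [:: (i, i'); (j, j'); (k, k')]].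
Proof.
case: (leqP i j) => h1; case: (leqP j k) => h2; case: (leqP i k) => h3.
- exists 1, (1 + minn (j - i) 2), (1 + minn (j - i) 2 + minn (k - j) 2).
  split; try lia; patt.
- lia.
- exists 1, (1 + minn (k - i) 2 + minn (j - k) 2), (1 + minn (k - i) 2).
  split; try lia; patt.
- exists (1 + minn (i - k) 2), (1 + minn (i - k) 2 + minn (j - i) 2), 1.
  split; try lia; patt.
- exists (1 + minn (i - j) 2), 1, (1 + minn (i - j) 2 + minn (k - i) 2).
  split; try lia; patt.
- exists (1 + minn (k - j) 2 + minn (i - k) 2), 1, (1 + minn (k - j) 2).
  split; try lia; patt.
- lia.
- exists (1 + minn (j - k) 2 + minn (i - j) 2), (1 + minn (j - k) 2), 1.
  split; try lia; patt.
Qed.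

Lemma patbP L x y : patb L -> x \in L -> y \in L ->
  (x.1 == y.1) = (x.2 == y.2) /\ (x.1 == y.1.+1) = (x.2 == y.2.+1).
Proof.
move=> /allP H xL yL; have /allP H2 := H x xL; have /andP[/eqP e1 /eqP e2] := H2 y yL.
by split.
Qed.

Definition psi_of (i j k i' j' k' : nat) (p : nat) : nat :=
  if p == i' then i else if p == j' then j else k.

Lemma psi_vals i j k i' j' k' : patb [:: (i, i'); (j, j'); (k, k')] ->
  [/\ psi_of i j k i' j' k' i' = i, psi_of i j k i' j' k' j' = j & psi_of i j k i' j' k' k' = k].
Proof.
move=> P.
have eqv1 : forall x y, (x, y) \in [:: (i, i'); (j, j'); (k, k')] ->
    forall x', (x', y) \in [:: (i, i'); (j, j'); (k, k')] -> x = x'.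
  move=> x y xL x' x'L; have [e _] := patbP P xL x'L.
  by rewrite /= eqxx in e; apply/eqP; rewrite e.
have mi : (i, i') \in [:: (i, i'); (j, j'); (k, k')] by rewrite !inE eqxx.
have mj : (j, j') \in [:: (i, i'); (j, j'); (k, k')] by rewrite !inE eqxx ?orbT.
have mk : (k, k') \in [:: (i, i'); (j, j'); (k, k')] by rewrite !inE eqxx ?orbT.
rewrite /psi_of eqxx; split => //.
- case: ifP => [/eqP E|_]; last by rewrite eqxx.
  by move: mj; rewrite {1}E => mj; exact: (eqv1 _ _ mi _ mj).
- case: ifP => [/eqP E|_].
    by move: mk; rewrite {1}E => mk; exact: (eqv1 _ _ mi _ mk).
  case: ifP => // /eqP E.
  by move: mk; rewrite {1}E => mk; exact: (eqv1 _ _ mj _ mk).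
Qed.

Lemma good_from_pat n i j k i' j' k' :
  valid_idx n i -> valid_idx n j -> valid_idx n k ->
  0 < i' < 6 -> 0 < j' < 6 -> 0 < k' < 6 ->
  patb [:: (i, i'); (j, j'); (k, k')] ->
  good 6 n (psi_of i j k i' j' k') [:: i'; j'; k'].
Proof.
move=> vi vj vk bi bj bk P.
have [ei ej ek] := psi_vals P.
set L := [:: (i, i'); (j, j'); (k, k')].
have key : forall p, p \in [:: i'; j'; k'] -> exists2 x, x \in L &
    [/\ x.2 = p, psi_of i j k i' j' k' p = x.1, valid_idx n x.1 & valid_idx 6 x.2].
  move=> p; rewrite !inE => /or3P[] /eqP ->.
  - by exists (i, i'); rewrite ?inE ?eqxx //; split => //; rewrite /valid_idx; lia.
  - by exists (j, j'); rewrite ?inE ?eqxx ?orbT //; split => //; rewrite /valid_idx; lia.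
  - by exists (k, k'); rewrite ?inE ?eqxx ?orbT //; split => //; rewrite /valid_idx; lia.
move=> p q /key [x xL [<- -> vx1 vx2]] /key [y yL [<- -> _ _]].
have [e1 e2] := patbP P xL yL.
by split; rewrite // vx1 vx2.
Qed.

Definition reidx (a : gen) (i : nat) : gen := if a is sg _ then sg i else xg i.

Lemma cube_all n a b c : CubeProp n a b c.
Proof.
move=> fca fac fcb fbc H1 H2.
have [vc va] := comp_valid H1; have [_ vb] := comp_valid H2.
have [i' [j' [k' [bi bj bk P]]]] := compress (gen_idx a) (gen_idx b) (gen_idx c).
have G := good_from_pat va vb vc bi bj bk P.
have [ei ej ek] := psi_vals P.
have inl : forall d p, 0 < p < 6 -> reidx d p \in letters.
  move=> d p bp; have hp : p \in iota 1 5 by rewrite mem_iota; lia.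
  rewrite /letters mem_cat; case: d => x.
  - by apply/orP; left; exact: (map_f sg hp).
  - by apply/orP; right; exact: (map_f xg hp).
have chk : cube_check 6 (reidx a i') (reidx b j') (reidx c k').
  have := check_all_ok; rewrite /check_all => /allP /(_ _ (inl a i' bi)) /allP
    /(_ _ (inl b j' bj)) /allP /(_ _ (inl c k' bk)); done.
have G' : good 6 n (psi_of (gen_idx a) (gen_idx b) (gen_idx c) i' j' k')
    [:: gen_idx (reidx a i'); gen_idx (reidx b j'); gen_idx (reidx c k')].
  have idx : forall d p, gen_idx (reidx d p) = p by case.
  by rewrite !idx.
have CP := cube_from_check chk G'.
have R : forall d p, rn (psi_of (gen_idx a) (gen_idx b) (gen_idx c) i' j' k') (reidx d p) =
   reidx d (psi_of (gen_idx a) (gen_idx b) (gen_idx c) i' j' k' p) by case.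
rewrite !R ei ej ek in CP.
have E : forall d, reidx d (gen_idx d) = d by case.
rewrite !E in CP; exact: CP H1 H2.
Qed.

Section Final.
Variable n : nat.

Lemma Qall a b X Y : sbeq n (a :: X) (b :: Y) -> Q n a X b Y.
Proof. move=> E; have := @H_all n (@cube_all n) (size X); rewrite /Hm; apply => //. Qed.

Lemma cancel_pre p U V : sbeq n (p ++ U) (p ++ V) -> sbeq n U V.
Proof.
elim: p => [//|a p IH] /= E; apply: IH; have := Qall E; by rewrite /Q eqxx.
Qed.

Lemma braid_cat u v : braid_word n (u ++ v) = braid_word n u && braid_word n v.
Proof.
rewrite /braid_word /valid_word !all_cat.
by case: (all _ u); case: (all _ v); case: (all _ u); case: (all _ v).
Qed.

Lemma valid_cat u v : valid_word n (u ++ v) = valid_word n u && valid_word n v.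
Proof. by rewrite /valid_word all_cat. Qed.

Lemma lcm_braid N : forall w, size w <= N -> forall a d, braid_word n a -> braid_word n d ->
  (exists u, sbeq n w (a ++ u)) -> (exists v, sbeq n w (d ++ v)) ->
  exists m, [/\ braid_word n m, (exists t, sbeq n w (m ++ t)),
     (exists p, sbeq n m (a ++ p)) & (exists q, sbeq n m (d ++ q))].
Proof.
elim: N => [|N IH] w sw a d ba bd [u wu] [v wv].
- exists d; split => //; first by exists v.
  + exists d; have := sbeq_size wu; move: sw; rewrite leqn0 => /eqP ->.
    by case: a {ba wu} => // _; exact: sbeq_refl.
  + by exists [::]; rewrite cats0; exact: sbeq_refl.
case: a ba wu => [|c a'] ba wu.
  exists d; split => //; first by exists v.
  + by exists d; exact: sbeq_refl.
  + by exists [::]; rewrite cats0; exact: sbeq_refl.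
case: d bd wv => [|e d'] bd wv.
  exists (c :: a'); split => //; first by exists u.
  + by exists [::]; rewrite cats0; exact: sbeq_refl.
  + by exists (c :: a'); exact: sbeq_refl.
have [bc ba'] : braid_word n [:: c] /\ braid_word n a' by move: ba; rewrite -cat1s braid_cat => /andP.
have [be bd'] : braid_word n [:: e] /\ braid_word n d' by move: bd; rewrite -cat1s braid_cat => /andP.
have E : sbeq n (c :: (a' ++ u)) (e :: (d' ++ v)) by apply: sbeq_trans (sbeq_sym wu) wv.
have sz : size (a' ++ u) <= N.
  by move: sw; rewrite (sbeq_size wu) /=.
have := Qall E; rewrite /Q; case: eqP => [ce|ce].
  subst e => E'.
  have [m [bm [t wt] [p mp] [q mq]]] := IH (a' ++ u) sz a' d' ba' bd' (ex_intro _ u (sbeq_refl _ _))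
     (ex_intro _ v E').
  exists (c :: m); split.
  + by rewrite -cat1s braid_cat bc.
  + by exists t; apply: sbeq_trans wu _; apply: sbeq_cons.
  + by exists p; apply: sbeq_cons.
  + by exists q; apply: sbeq_cons.
case=> f [g [Z [Hc E1 E2]]].
have bfg : braid_word n f && braid_word n g.
  move: bc be; rewrite /braid_word /= !andbT => /andP[_ sc] /andP[_ se].
  have vfg := comp_validw Hc; rewrite valid_cat in vfg.
  case: c e sc se Hc {E ce ba bd wu wv} => // i [] // j _ _ Hc.
  have := comp_sg Hc; rewrite all_cat => /andP[-> ->].
  by move: vfg => /andP[-> ->].
case/andP: bfg => bf bg.
have [m1 [bm1 [t1 wt1] [p1 mp1] [q1 mq1]]] :=
  IH (a' ++ u) sz a' f ba' bf (ex_intro _ u (sbeq_refl _ _)) (ex_intro _ Z E1).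
have sz2 : size (d' ++ v) <= N by have := sbeq_size E => /= -[<-].
have [m2 [bm2 [t2 wt2] [p2 mp2] [q2 mq2]]] :=
  IH (d' ++ v) sz2 d' g bd' bg (ex_intro _ v (sbeq_refl _ _)) (ex_intro _ Z E2).
have bq1 : braid_word n q1 by move: bm1; rewrite (sbeq_braid mq1) braid_cat => /andP[].
have bq2 : braid_word n q2 by move: bm2; rewrite (sbeq_braid mq2) braid_cat => /andP[].
have Z1 : sbeq n Z (q1 ++ t1).
  apply: (@cancel_pre f); rewrite catA; apply: sbeq_trans (sbeq_sym E1) _.
  apply: sbeq_trans wt1 _; exact: sbeq_catr.
have Z2 : sbeq n Z (q2 ++ t2).
  apply: (@cancel_pre g); rewrite catA; apply: sbeq_trans (sbeq_sym E2) _.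
  apply: sbeq_trans wt2 _; exact: sbeq_catr.
have szZ : size Z <= N.
  by move: sz; rewrite (sbeq_size E1) size_cat; lia.
have [m3 [bm3 [t3 wt3] [r1 mr1] [r2 mr2]]] :=
  IH Z szZ q1 q2 bq1 bq2 (ex_intro _ t1 Z1) (ex_intro _ t2 Z2).
exists (c :: f ++ m3); split.
- by rewrite -cat1s !braid_cat bc bf bm3.
- exists t3; apply: sbeq_trans wu _; rewrite /= -catA; apply: sbeq_cons.
  apply: sbeq_trans E1 _; exact: sbeq_catl.
- exists (p1 ++ r1); rewrite /=; apply: sbeq_cons.
  apply: sbeq_trans (sbeq_catl f mr1) _; rewrite catA.
  apply: sbeq_trans (sbeq_catr r1 (sbeq_sym mq1)) _; rewrite catA; exact: sbeq_catr.
- exists (p2 ++ r2).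
  have Ecg : sbeq n (c :: f ++ m3) (e :: g ++ m3).
    by have := sbeq_catr m3 (comp_sbeq Hc).
  apply: sbeq_trans Ecg _; rewrite /=; apply: sbeq_cons.
  apply: sbeq_trans (sbeq_catl g mr2) _; rewrite catA.
  apply: sbeq_trans (sbeq_catr r2 (sbeq_sym mq2)) _; rewrite catA; exact: sbeq_catr.
Qed.

End Final.

From Stdlib Require Import ClassicalEpsilon.

Section Greatest.
Variable n : nat.

Lemma left_unique w d d' : greatest_left_braid_divisor n w d ->
  greatest_left_braid_divisor n w d' -> sbeq n d' d.
Proof.
move=> [bd [ud Gd]] [bd' [ud' Gd']].
have [b [_ E1]] := Gd' d bd ud.
have [b' [_ E2]] := Gd d' bd' ud'.
have s1 := sbeq_size E1; have s2 := sbeq_size E2.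
rewrite size_cat in s1; rewrite size_cat in s2.
have : size b = 0 by lia.
by case: b E1 {s1} => // E1 _; rewrite cats0 in E1.
Qed.

Lemma left_exists w : valid_word n w -> exists d, greatest_left_braid_divisor n w d.
Proof.
move=> hw.
pose P k := exists d, [/\ size d = k, braid_word n d & exists u, valid_word n u /\ sbeq n w (d ++ u)].
pose pb k := if excluded_middle_informative (P k) then true else false.
have pbP : forall k, pb k -> P k by move=> k; rewrite /pb; case: excluded_middle_informative.
have Ppb : forall k, P k -> pb k by move=> k; rewrite /pb; case: excluded_middle_informative.
have ex : exists k, pb k.
  exists 0; apply: Ppb; exists [::]; split => //; exists w; split => //; exact: sbeq_refl.
have bnd : forall k, pb k -> k <= size w.
  move=> k /pbP [d [<- _ [u [_ E]]]]; rewrite (sbeq_size E) size_cat; exact: leq_addr.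
case: (ex_maxnP ex bnd) => k /pbP [d [sd bd [u [vu wu]]]] kmax.
exists d; split => //; split; first by exists u.
move=> a ba [v [vv wv]].
have [m [bm [t wt] [p mp] [q mq]]] :=
  lcm_braid (leqnn (size w)) ba bd (ex_intro _ v wv) (ex_intro _ u wu).
have vt : valid_word n t.
  by move: hw; rewrite (sbeq_valid wt) valid_cat => /andP[].
have : size m <= k by apply: kmax; apply: Ppb; exists m; split => //; exists t.
rewrite (sbeq_size mq) size_cat sd => le.
have q0 : q = [::] by case: q {mq} le => //= ? ? ; rewrite addnS ltnNge leq_addr.
subst q; rewrite cats0 in mq.
exists p; split.
- by move: bm; rewrite /braid_word (sbeq_valid mp) valid_cat => /andP[/andP[_ ->]].
- exact: sbeq_trans (sbeq_sym mq) mp.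
Qed.

Lemma sbeq_rev w1 w2 : sbeq n w1 w2 -> sbeq n (rev w1) (rev w2).
Proof.
elim=> [u v l r H | w | w1' w2' _ IH | w1' w2' w3' _ IH1 _ IH2].
- rewrite !rev_cat -!catA; apply: sbeq_cat.
  case: H => [i j vi vj f | i j vi vj f | i j vi vj f | i vi vi1 | i vi vi1 | i vi vi1];
    rewrite /rev /=.
  + by apply: sbeq_rel; apply: rel_ss; rewrite // far_sym.
  + by apply: sbeq_rel; apply: rel_xx; rewrite // far_sym.
  + by apply: sbeq_sym; apply: sbeq_rel; apply: rel_xs.
  + by apply: sbeq_rel; apply: rel_sss.
  + by apply: sbeq_sym; apply: sbeq_rel; apply: rel_ssx'.
  + by apply: sbeq_sym; apply: sbeq_rel; apply: rel_ssx.
- exact: sbeq_refl.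
- exact: sbeq_sym.
- exact: sbeq_trans IH2.
Qed.

Lemma braid_rev d : braid_word n (rev d) = braid_word n d.
Proof. by rewrite /braid_word /valid_word !all_rev. Qed.

Lemma valid_rev d : valid_word n (rev d) = valid_word n d.
Proof. by rewrite /valid_word all_rev. Qed.

Lemma left_to_right w D : greatest_left_braid_divisor n (rev w) D ->
  greatest_right_braid_divisor n w (rev D).
Proof.
move=> [bD [[U [vU wU]] GD]]; split; first by rewrite braid_rev.
split.
  exists (rev U); split; first by rewrite valid_rev.
  by rewrite -(revK w) -rev_cat; apply: sbeq_rev.
move=> a ba [v [vv wv]].
have [b [vb Db]] : exists b, valid_word n b /\ sbeq n D (rev a ++ b).
  apply: GD; first by rewrite braid_rev.
  exists (rev v); split; first by rewrite valid_rev.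
  by rewrite -rev_cat; apply: sbeq_rev.
exists (rev b); split; first by rewrite valid_rev.
by rewrite -(revK a) -rev_cat; apply: sbeq_rev.
Qed.

Lemma right_to_left w d : greatest_right_braid_divisor n w d ->
  greatest_left_braid_divisor n (rev w) (rev d).
Proof.
move=> [bd [[u [vu wu]] Gd]]; split; first by rewrite braid_rev.
split.
  exists (rev u); split; first by rewrite valid_rev.
  by rewrite -rev_cat; apply: sbeq_rev.
move=> a ba [v [vv wv]].
have [b [vb db]] : exists b, valid_word n b /\ sbeq n d (b ++ rev a).
  apply: Gd; first by rewrite braid_rev.
  exists (rev v); split; first by rewrite valid_rev.
  by rewrite -(revK w) -rev_cat; apply: sbeq_rev.
exists (rev b); split; first by rewrite valid_rev.
by have := sbeq_rev db; rewrite rev_cat revK.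
Qed.

End Greatest.

Theorem corollary2p2 (n : nat) (hn : 2 <= n) (w : seq gen) (hw : valid_word n w) :
  (exists d, greatest_left_braid_divisor n w d /\
     forall d', greatest_left_braid_divisor n w d' -> sbeq n d' d) /\
  (exists d, greatest_right_braid_divisor n w d /\
     forall d', greatest_right_braid_divisor n w d' -> sbeq n d' d).
Proof.
split.
- have [d Gd] := left_exists hw.
  by exists d; split => // d' Gd'; exact: left_unique Gd Gd'.
- have hw' : valid_word n (rev w) by rewrite valid_rev.
  have [D GD] := left_exists hw'.
  exists (rev D); split; first exact: left_to_right.
  move=> d' Gd'; have := left_unique GD (right_to_left Gd').
  by move/sbeq_rev; rewrite revK.
Qed.
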